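(* Every partition $F\subseteq S^d$ that is a $k$-neighborly family for some $k\leqslant 2$ is a total lamination.
   Context: Let $S=\{0,1,\ast\}$ and let $S^d$ be the set of strings of length $d$ over $S$; the symbol $\ast$ is called a joker, and $j(x)$ denotes the number of jokers in $x\in S^d$. For $x,y\in S^d$, $d(x,y)$ is the number of positions $i\in[d]$ such that one of $x_i,y_i$ equals $0$ and the other equals $1$. A family $F\subseteq S^d$ is $k$-neighborly if $1\leqslant d(x,y)\leqslant k$ for all distinct $x,y\in F$. A $k$-neighborly family $F$ is a partition if $\sum_{x\in F}2^{j(x)}=2^d$. For $s\in S$ and $i\in[d]$, $F^{i,s}$ denotes the set of strings in $F$ having symbol $s$ at position $i$. A family $F\subseteq S^d$ is a lamination if it is a partition and $F=F^{i,0}\cup F^{i,1}$ for some $i\in[d]$. For $v\in S^d$ and $i\in[d]$, $v_{-i}$ is the string of length $d-1$ obtained by deleting the $i$-th letter of $v$, and $F_{-i}=\{v_{-i}:v\in F\}$. Total laminations are defined recursively on $d$: for every $d\geqslant 1$, the one-element family $\{\ast\ast\cdots\ast\}\subseteq S^d$ and the full cube $\{0,1\}^d\subseteq S^d$ are total laminations; and a lamination $F\subseteq S^d$ is a total lamination if there is $i\in[d]$ with $F=F^{i,0}\cup F^{i,1}$ such that both $(F^{i,0})_{-i}$ and $(F^{i,1})_{-i}$ are total laminations (in $S^{d-1}$). *)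

(* Defs.v *)
From mathcomp Require Import all_boot.
Set Implicit Arguments. Unset Strict Implicit. Unset Printing Implicit Defensive.

(* Alphabet S = {0,1,*} encoded as option bool:
   Some false = 0, Some true = 1, None = joker *. *)
Definition sym := option bool.
Definition s0 : sym := Some false.
Definition s1 : sym := Some true.
Definition joker : sym := None.

Definition word (d : nat) := {ffun 'I_d -> sym}.

Definition jokers d (x : word d) : nat := #|[set i | x i == joker]|.

Definition wdist d (x y : word d) : nat :=
  #|[set i | ((x i == s0) && (y i == s1)) || ((x i == s1) && (y i == s0))]|.

Definition neighborly d (k : nat) (F : {set word d}) : Prop :=
  forall x y, x \in F -> y \in F -> x != y -> 1 <= wdist x y <= k.

Definition is_partition d (F : {set word d}) : Prop :=
  (exists k, neighborly k F) /\ \sum_(x in F) 2 ^ jokers x = 2 ^ d.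

Definition fam_at d (F : {set word d}) (i : 'I_d) (s : sym) : {set word d} :=
  [set x in F | x i == s].

Definition del_letter d (i : 'I_d.+1) (v : word d.+1) : word d :=
  [ffun j => v (lift i j)].

Definition del_fam d (i : 'I_d.+1) (F : {set word d.+1}) : {set word d} :=
  [set del_letter i v | v in F].

Definition lamination_at d (F : {set word d}) (i : 'I_d) : Prop :=
  is_partition F /\ F = fam_at F i s0 :|: fam_at F i s1.

Definition all_joker d : word d := [ffun _ => joker].
Definition full_cube d : {set word d} := [set x : word d | [forall i, x i != joker]].

Inductive total_lamination : forall d : nat, {set word d} -> Prop :=
| TL_joker d : 1 <= d -> total_lamination [set all_joker d]
| TL_cube d : 1 <= d -> total_lamination (full_cube d)
| TL_split d (F : {set word d.+2}) (i : 'I_d.+2) :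
    lamination_at F i ->
    total_lamination (del_fam i (fam_at F i s0)) ->
    total_lamination (del_fam i (fam_at F i s1)) ->
    total_lamination F.

(* Main.v *)
Require Import Defs.
From mathcomp Require Import all_boot all_order all_algebra zify.
Set Implicit Arguments. Unset Strict Implicit. Unset Printing Implicit Defensive.
Import GRing.Theory Num.Theory.

Definition pt d := {ffun 'I_d -> bool}.
Definition covers d (w : word d) (p : pt d) : bool :=
  [forall i, (w i == None) || (w i == Some (p i))].

Lemma card_covers d (w : word d) : #|[set p : pt d | covers w p]| = 2 ^ jokers w.
Proof.
pose F := fun i : 'I_d => (if w i is Some b then pred1 b else predT) : pred bool.
have -> : #|[set p : pt d | covers w p]| = #|(family F : simpl_pred (pt d))|.
  apply: eq_card => p; rewrite inE /covers; apply/forallP/familyP => H i; move: (H i);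
  rewrite /F; case: (w i) => [b|] //=; rewrite ?inE //.
  by move/eqP => [->]. by move/eqP => ->.
rewrite card_family foldrE big_map big_enum /=.
rewrite /jokers (bigID (fun i => w i == joker)) /=.
rewrite [X in _ * X]big1 ?muln1; last first.
  by move=> i; rewrite /F; case: (w i) => //= b _; rewrite card1.
rewrite (eq_bigr (fun _ => 2)); last first.
  by move=> i /eqP; rewrite /F => ->; rewrite card_bool.
by rewrite prod_nat_const cardsE.
Qed.

Definition Dg d (x y : word d) (i : 'I_d) : bool :=
  ((x i == s0) && (y i == s1)) || ((x i == s1) && (y i == s0)).

Lemma wdistE d (x y : word d) : wdist x y = #|[set i | Dg x y i]|.
Proof. by []. Qed.

Definition disj d (F : {set word d}) :=
  forall x y, x \in F -> y \in F -> x != y -> 0 < wdist x y.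

Lemma covers_wdist0 d (x y : word d) p : covers x p -> covers y p -> wdist x y = 0.
Proof.
move=> /forallP Hx /forallP Hy; apply/eqP; rewrite cards_eq0; apply/eqP/setP => i.
rewrite !inE /Dg; move: (Hx i) (Hy i).
by case: (x i) => [[]|]; case: (y i) => [[]|]; case: (p i).
Qed.

Lemma sum_cover d (F : {set word d}) : disj F ->
  \sum_(x in F) 2 ^ jokers x = #|[set p : pt d | [exists w in F, covers w p]]|.
Proof.
move=> HF.
under eq_bigr do rewrite -card_covers.
transitivity (\sum_(x in F) \sum_(p : pt d) (covers x p : nat)).
  apply eq_bigr => x _; rewrite -sum1_card big_mkcond /=; apply eq_bigr => p _.
  by rewrite inE; case: covers.
rewrite exchange_big /= -sum1_card [RHS]big_mkcond /=; apply eq_bigr => p _.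
rewrite inE; case: existsP => [[w /andP[wF cw]]|none].
  rewrite (bigD1 w) //= cw big1 // => x /andP[xF xw].
  case cx: (covers x p) => //.
  by move: (HF x w xF wF xw); rewrite (covers_wdist0 cx cw).
rewrite big1 // => x xF; case cx: (covers x p) => //.
by exfalso; apply: none; exists x; rewrite xF cx.
Qed.

Definition cov d (F : {set word d}) := forall p : pt d, exists2 w, w \in F & covers w p.

Lemma card_pt d : #|[set: pt d]| = 2 ^ d.
Proof. by rewrite cardsT card_ffun card_bool card_ord. Qed.

Lemma part_cov d (F : {set word d}) : disj F ->
  \sum_(x in F) 2 ^ jokers x = 2 ^ d -> cov F.
Proof.
move=> HF; rewrite sum_cover // -card_pt => Hc p.
have : [set p : pt d | [exists w in F, covers w p]] = [set: pt d].
  by apply/eqP; rewrite eqEcard subsetT Hc leqnn.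
move/setP/(_ p); rewrite !inE => /existsP [w /andP[wF cw]].
by exists w.
Qed.

Lemma cov_part d (F : {set word d}) : disj F -> cov F ->
  \sum_(x in F) 2 ^ jokers x = 2 ^ d.
Proof.
move=> HF Hc; rewrite sum_cover // -card_pt; apply: eq_card => p; rewrite !inE; have [w wF cw] := Hc p.
by apply/existsP; exists w; rewrite wF cw.
Qed.

Definition nb2 d (F : {set word d}) :=
  forall x y, x \in F -> y \in F -> x != y -> wdist x y <= 2.
Definition Nw d (w : word d) : {set 'I_d} := [set i | w i != None].
Definition flip d (k : 'I_d) (p : pt d) : pt d := [ffun j => if j == k then ~~ p j else p j].
Definition sg d (S : {set 'I_d}) (p : pt d) : int := (\prod_(i in S) (if p i then -1 else 1))%R.
Definition ptw d (w : word d) : pt d := [ffun i => w i == Some true].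

Lemma flipK d k : involutive (@flip d k).
Proof. by move=> p; apply/ffunP => j; rewrite !ffunE; case: eqP => // _; rewrite negbK. Qed.

Lemma sg_flip d (S : {set 'I_d}) k p : k \in S -> sg S (flip k p) = (- sg S p)%R.
Proof.
move=> kS; rewrite /sg (bigD1 k) //= [in RHS](bigD1 k) //= ffunE eqxx.
rewrite (eq_bigr (fun i => if p i then -1 else 1)%R); last first.
  by move=> i /andP[_ /negbTE ik]; rewrite ffunE ik.
by case: (p k) => /=; rewrite ?mulN1r ?mul1r ?opprK.
Qed.

Lemma sum_sg_flip d (S : {set 'I_d}) k (P : pred (pt d)) :
  k \in S -> (forall p, P (flip k p) = P p) -> (\sum_(p | P p) sg S p)%R = 0%R.
Proof.
move=> kS HP.
have E : (\sum_(p | P p) sg S p = \sum_(p | P p) sg S (flip k p))%R.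
  by rewrite {1}(reindex_inj (can_inj (flipK k))) /=; apply eq_bigl => p; rewrite HP.
rewrite [X in _ = X](eq_bigr (fun p => - sg S p)%R) in E; last by move=> p _; rewrite sg_flip.
rewrite sumrN in E; move: E; set s := (\sum_(p | P p) sg S p)%R => E.
lia.
Qed.

Lemma sg_cover d (S : {set 'I_d}) (w : word d) p :
  S \subset Nw w -> covers w p -> sg S p = sg S (ptw w).
Proof.
move=> /subsetP SN /forallP cw; rewrite /sg; apply eq_bigr => i iS.
have := SN i iS; have := cw i; rewrite inE ffunE.
by case: (w i) => [b|] //= /eqP [->]; case: (p i).
Qed.

Lemma sg_mul d (S : {set 'I_d}) p q :
  (sg S p * sg S q = (-1) ^+ #|[set i in S | p i != q i]|)%R.
Proof.
rewrite /sg -big_split /= -prodr_const.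
rewrite [RHS]big_mkcond /= [LHS]big_mkcond /=; apply eq_bigr => i _.
rewrite inE; case: (i \in S) => //=.
by case: (p i); case: (q i); rewrite /= ?mulrNN ?mulr1 ?mul1r.
Qed.

Lemma sg_sq d (S : {set 'I_d}) p : (sg S p * sg S p = 1)%R.
Proof.
rewrite sg_mul; have -> : [set i in S | p i != p i] = set0.
  by apply/setP => i; rewrite !inE eqxx andbF.
by rewrite cards0 expr0.
Qed.

Lemma sum_decomp d (F : {set word d}) (S : {set 'I_d}) : disj F -> cov F ->
  (\sum_(p : pt d) sg S p = \sum_(w in F) \sum_(p | covers w p) sg S p)%R.
Proof.
move=> HF Hc.
transitivity (\sum_(p : pt d) \sum_(w in F) (if covers w p then sg S p else 0))%R.
  apply eq_bigr => p _; have [w0 wF cw] := Hc p.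
  rewrite (bigD1 w0) //= cw big1 ?addr0 // => w /andP[wF' ww0].
  case cw': (covers w p) => //.
  by move: (HF w w0 wF' wF ww0); rewrite (covers_wdist0 cw' cw).
by rewrite exchange_big /=; apply eq_bigr => w _; rewrite [RHS]big_mkcond.
Qed.

Lemma covers_ptw d (w : word d) : covers w (ptw w).
Proof. by apply/forallP => i; rewrite ffunE; case: (w i) => [[]|]. Qed.

Lemma Dg_Some d (x y : word d) i : Dg x y i -> x i != None /\ y i != None /\ x i != y i.
Proof. by rewrite /Dg; case: (x i) => [[]|]; case: (y i) => [[]|]. Qed.

Lemma twin d (F : {set word d}) : 1 < #|F| -> disj F -> nb2 F -> cov F ->
  exists x y i, [/\ x \in F, y \in F, [&& x i != None, y i != None & x i != y i] &
                   forall k, k != i -> x k = y k].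
Proof.
move=> F2 HF H2 Hc.
have [x0 x0F] : exists x0, x0 \in F.
  by apply/set0Pn; rewrite -card_gt0; apply: ltnW.
case: (@arg_maxnP _ x0 (fun w => w \in F) (fun w => #|Nw w|) x0F) => x xF xmax.
set S := Nw x.
have [k kS] : exists k, k \in S.
  have : 0 < #|F :\ x| by rewrite (cardsD1 x F) xF in F2.
  rewrite card_gt0 => /set0Pn [y]; rewrite !inE => /andP[yx yF].
  have := HF x y xF yF; rewrite eq_sym yx => /(_ isT); rewrite card_gt0 => /set0Pn [i].
  by rewrite inE => /Dg_Some [xi _]; exists i; rewrite inE.
have Hsum : (\sum_(w in F) \sum_(p | covers w p) sg S p = 0)%R.
  by rewrite -sum_decomp // (sum_sg_flip (P := predT) kS).
have Tw : forall w, w \in F -> (\sum_(p | covers w p) sg S p =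
    sg S (ptw w) *+ (if S \subset Nw w then #|[set p | covers w p]| else 0))%R.
  move=> w wF; case: ifP => Sw.
    rewrite (eq_bigr (fun _ => sg S (ptw w))); last by move=> p cp; rewrite (sg_cover Sw cp).
    by rewrite -sumr_const; apply eq_bigl => p; rewrite inE.
  have /subsetPn [k' k'S] := negbT Sw; rewrite inE negbK => /eqP wk'.
  rewrite mulr0n; apply: (sum_sg_flip k'S) => p.
  apply: eq_forallb => i; rewrite ffunE; case E: (i == k'); last by [].
  by move/eqP: E => ->; rewrite wk'.
pose sx := sg S (ptw x).
case: (boolP [exists y in F, (S \subset Nw y) && (sg S (ptw y) != sx)]); last first.
  move=> none; exfalso.
  have H : forall y, y \in F -> S \subset Nw y -> sg S (ptw y) = sx.
    move=> y yF Sy; apply/eqP; apply: contraNT none => ne.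
    by apply/existsP; exists y; rewrite yF Sy ne.
  have : (\sum_(w in F) sx *+ (if S \subset Nw w then #|[set p | covers w p]| else 0) = 0)%R.
    rewrite -[RHS]Hsum; apply eq_bigr => w wF; rewrite Tw //; case: ifP => Sw //.
    by rewrite (H w wF Sw).
  rewrite sumrMnr; set N := (\sum_(w in F) _)%N => HN.
  have : (sx * (sx *+ N) = 0)%R by rewrite HN mulr0.
  rewrite mulrnAr sg_sq => /eqP; rewrite pnatr_eq0 /N (bigD1 x) //= subxx.
  have : 0 < #|[set p | covers x p]|.
    by rewrite card_gt0; apply/set0Pn; exists (ptw x); rewrite inE covers_ptw.
  by case: #|_|.
move=> /existsP [y /and3P[yF Sy sy]].
have Nyeq : Nw y = S.
  by apply/eqP; rewrite eq_sym eqEcard Sy /=; apply: (xmax y yF).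
have yx : x != y by apply: contraNneq sy => <-.
have w1 := HF x y xF yF yx; have w2 := H2 x y xF yF yx.
have Eset : [set i in S | ptw x i != ptw y i] = [set i | Dg x y i].
  apply/setP => i; move/setP: Nyeq => /(_ i); rewrite !inE !ffunE /Dg.
  by case: (x i) => [[]|]; case: (y i) => [[]|].
have wd1 : wdist x y = 1.
  have : wdist x y != 2.
    apply/negP => /eqP w2'; move: sy; rewrite -[sg S (ptw y)]mul1r -(sg_sq S (ptw x)).
    by rewrite -mulrA sg_mul Eset -wdistE w2' expr2 mulrNN mulr1 eqxx.
  move: w1 w2; lia.
move: wd1; rewrite wdistE => /eqP/cards1P [i Hi].
have Di : Dg x y i by have := in_set1 i i; rewrite -Hi inE eqxx.
have [xi [yi xyi]] := Dg_Some Di.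
exists x, y, i; split => //; first by rewrite xi yi xyi.
move=> j ji; have : ~~ Dg x y j.
  by apply/negP => Dj; move: (in_set1 j i); rewrite -Hi inE Dj (negbTE ji).
move/setP: Nyeq => /(_ j); rewrite !inE /Dg.
by case: (x j) => [[]|]; case: (y j) => [[]|].
Qed.

Lemma wdistC d (x y : word d) : wdist x y = wdist y x.
Proof.
rewrite !wdistE; apply: eq_card => k; rewrite !inE /Dg.
by case: (x k) => [[]|]; case: (y k) => [[]|].
Qed.

Lemma wdist_pos d (x y : word d) : 0 < wdist x y -> exists k, Dg x y k.
Proof. by rewrite wdistE card_gt0 => /set0Pn [k]; rewrite inE; exists k. Qed.

Lemma core n : forall d (F : {set word d}), #|F| = n.+2 -> disj F -> nb2 F -> cov F ->
  exists m, forall w, w \in F -> w m != None.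
Proof.
elim: n => [|n IH] d F cF HF H2 Hc;
  (have [x [y [i [xF yF /and3P[xi yi xyi] xy]]]] : exists x y i, [/\ x \in F, y \in F,
     [&& x i != None, y i != None & x i != y i] & forall k, k != i -> x k = y k]
     by apply: twin => //; rewrite cF);
  have yx : y != x by apply: contraNneq xyi => ->.
- have c0 : #|(F :\ x) :\ y| = 0.
    move: cF; rewrite (cardsD1 x F) xF (cardsD1 y (F :\ x)) !inE yx yF.
    by case.
  exists i => w wF; case: (eqVneq w x) => [->//|wx]; case: (eqVneq w y) => [->//|wy].
  by move: c0; rewrite (cardsD1 w) !inE wx wy wF.
pose z : word d := [ffun k => if k == i then None else x k].
have zk : forall k, k != i -> z k = x k by move=> k ki; rewrite ffunE (negbTE ki).
have zi : z i = None by rewrite ffunE eqxx.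
have Dz : forall w k, Dg z w k -> Dg x w k /\ k != i.
  move=> w k; case: (eqVneq k i) => [->|ki]; first by rewrite /Dg zi.
  by rewrite /Dg zk.
have zle : forall w, wdist z w <= wdist x w.
  move=> w; rewrite !wdistE; apply: subset_leq_card; apply/subsetP => k.
  by rewrite !inE => /Dz [].
have zpos : forall w, w \in F -> w != x -> w != y -> 0 < wdist z w.
  move=> w wF wx wy; rewrite lt0n; apply/negP => /eqP w0.
  have nD : forall k, ~~ Dg z w k.
    move=> k; apply/negP => Dk; move: w0; rewrite wdistE => /eqP; rewrite cards_eq0.
    by move=> /eqP/setP/(_ k); rewrite !inE Dk.
  have := HF x w xF wF; rewrite eq_sym wx => /(_ isT) /wdist_pos [k Dk].
  have := HF y w yF wF; rewrite eq_sym wy => /(_ isT) /wdist_pos [k' Dk'].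
  have ki : k = i.
    apply/eqP; apply: contraNT (nD k) => kni; by rewrite /Dg zk.
  have k'i : k' = i.
    apply/eqP; apply: contraNT (nD k') => kni; by rewrite /Dg zk // xy.
  move: Dk Dk' xyi; rewrite ki k'i /Dg.
  by case: (x i) => [[]|]; case: (y i) => [[]|]; case: (w i) => [[]|].
have zF : z \notin F.
  apply/negP => zF; have zx : z != x by apply/eqP => E; move: xi; rewrite -E zi.
  have := HF z x zF xF zx; rewrite lt0n => /negP; apply; apply/eqP.
  rewrite wdistE; apply/eqP; rewrite cards_eq0; apply/eqP/setP => k; rewrite !inE.
  apply/negP => /Dz [+ ki]; rewrite /Dg.
  by case: (x k) => [[]|].
pose F' := z |: ((F :\ x) :\ y).
have inF' : forall w, (w \in F') = (w == z) || [&& w != y, w != x & w \in F].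
  by move=> w; rewrite !inE.
have cF' : #|F'| = n.+2.
  rewrite cardsU1 !inE (negbTE zF) !andbF /=.
  move: cF; rewrite (cardsD1 x F) xF (cardsD1 y (F :\ x)) !inE yx yF.
  move=> /= E; move: E; rewrite !add1n => -[E]. by rewrite E.
have HF' : disj F' /\ nb2 F'.
  have key : forall u v, u \in F' -> v \in F' -> u != v -> v != z ->
      0 < wdist u v <= 2.
    move=> u v; rewrite !inF' => Hu Hv uv vz.
    case/orP: Hv => [/eqP vz'|/and3P[vy vx vF]]; first by rewrite vz' eqxx in vz.
    case/orP: Hu => [/eqP ->|/and3P[uy ux uF]].
      rewrite zpos //=; apply: (@leq_trans (wdist x v)); first exact: zle.
      by apply: H2 => //; rewrite eq_sym.
    by rewrite HF //= H2.
  split => u v uF vF uv.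
    case: (eqVneq v z) => [vz|vz]; last by case/andP: (key u v uF vF uv vz).
    rewrite wdistC; have uz : u != z by rewrite -vz.
    by case/andP: (key v u vF uF ltac:(by rewrite eq_sym) uz).
  case: (eqVneq v z) => [vz|vz]; last by case/andP: (key u v uF vF uv vz).
  rewrite wdistC; have uz : u != z by rewrite -vz.
  by case/andP: (key v u vF uF ltac:(by rewrite eq_sym) uz).
have Hc' : cov F'.
  move=> p; have [w wF cw] := Hc p.
  case: (eqVneq w x) => [wx|wx]; last case: (eqVneq w y) => [wy|wy].
  - exists z; first by rewrite inF' eqxx.
    apply/forallP => k; case: (eqVneq k i) => [->|ki]; first by rewrite zi.
    by rewrite zk // -wx; move/forallP: cw; apply.
  - exists z; first by rewrite inF' eqxx.
    apply/forallP => k; case: (eqVneq k i) => [->|ki]; first by rewrite zi.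
    by rewrite zk // xy // -wy; move/forallP: cw; apply.
  by exists w => //; rewrite inF' wx wy wF orbT.
have [HF1 HF2] := HF'.
have [m Hm] := IH d F' cF' HF1 HF2 Hc'.
have zm := Hm z ltac:(by rewrite inF' eqxx).
have mi : m != i by apply: contraNneq zm => ->; rewrite zi.
exists m => w wF; case: (eqVneq w x) => [->|wx]; first by rewrite -zk.
case: (eqVneq w y) => [->|wy]; first by rewrite -xy // -zk.
by apply: Hm; rewrite inF' wx wy wF orbT.
Qed.

Lemma Dg_del d (i : 'I_d.+1) (v v' : word d.+1) k :
  Dg (del_letter i v) (del_letter i v') k = Dg v v' (lift i k).
Proof. by rewrite /Dg !ffunE. Qed.

Lemma lift_set d (i : 'I_d.+1) (P : pred 'I_d.+1) (Q : pred 'I_d) :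
  ~~ P i -> (forall k, Q k = P (lift i k)) ->
  [set k | P k] = lift i @: [set k | Q k].
Proof.
move=> Pi HQ; apply/setP => k; case: (unliftP i k) => [j ->|->].
  by rewrite mem_imset ?inE ?HQ //; exact: lift_inj.
rewrite inE (negbTE Pi); apply/esym/negP => /imsetP [j _ E].
by have := neq_lift i j; rewrite -E eqxx.
Qed.

Lemma wdist_del d (i : 'I_d.+1) (v v' : word d.+1) : v i = v' i ->
  wdist (del_letter i v) (del_letter i v') = wdist v v'.
Proof.
move=> E; rewrite !wdistE (@lift_set _ i (Dg v v') (Dg (del_letter i v) (del_letter i v'))).
- by rewrite card_imset //; exact: lift_inj.
- by rewrite /Dg E; case: (v' i) => [[]|].
- by move=> k; rewrite Dg_del.
Qed.

Lemma jokers_del d (i : 'I_d.+1) (v : word d.+1) : v i != None -> jokers (del_letter i v) = jokers v.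
Proof.
move=> vi; rewrite /jokers (@lift_set _ i (fun k => v k == joker) (fun k => del_letter i v k == joker)).
- by rewrite card_imset //; exact: lift_inj.
- by [].
- by move=> k; rewrite ffunE.
Qed.

Lemma del_inj d (i : 'I_d.+1) (v v' : word d.+1) : v i = v' i -> del_letter i v = del_letter i v' -> v = v'.
Proof.
move=> E /ffunP H; apply/ffunP => k; case: (unliftP i k) => [j ->|->] //.
by have := H j; rewrite !ffunE.
Qed.

Lemma sub_ok d (F : {set word d.+1}) m (b : bool) : disj F -> nb2 F -> cov F ->
  (forall w, w \in F -> w m != None) ->
  [/\ disj (del_fam m (fam_at F m (Some b))), nb2 (del_fam m (fam_at F m (Some b)))
    & cov (del_fam m (fam_at F m (Some b)))].
Proof.
move=> HF H2 Hc Hm.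
have memG : forall u, u \in del_fam m (fam_at F m (Some b)) ->
    exists2 v, v \in F /\ v m = Some b & u = del_letter m v.
  by move=> u /imsetP [v]; rewrite inE => /andP[vF /eqP vm] ->; exists v.
have key : forall u u', u \in del_fam m (fam_at F m (Some b)) ->
    u' \in del_fam m (fam_at F m (Some b)) -> u != u' ->
    exists v v', [/\ v \in F, v' \in F, v != v' & wdist u u' = wdist v v'].
  move=> u u' /memG [v [vF vm] ->] /memG [v' [v'F v'm] ->] uu.
  exists v, v'; split => //; last by rewrite wdist_del // vm v'm.
  by apply: contraNneq uu => ->.
split.
- move=> u u' uG u'G uu; have [v [v' [vF v'F vv ->]]] := key u u' uG u'G uu; exact: HF.
- move=> u u' uG u'G uu; have [v [v' [vF v'F vv ->]]] := key u u' uG u'G uu; exact: H2.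
move=> q; pose p : pt d.+1 := [ffun k => if unlift m k is Some j then q j else b].
have [w wF cw] := Hc p.
have wm : w m = Some b.
  move/forallP: cw => /(_ m); rewrite ffunE unlift_none.
  by move: (Hm w wF); case: (w m) => [c|] //= _ /eqP ->.
exists (del_letter m w).
  by apply/imsetP; exists w => //; rewrite inE wF wm eqxx.
apply/forallP => j; move/forallP: cw => /(_ (lift m j)).
by rewrite !ffunE liftK.
Qed.

Lemma nb_of d k (F : {set word d}) : k <= 2 -> neighborly k F -> disj F /\ nb2 F.
Proof.
move=> k2 H; split => x y xF yF xy; have /andP[h1 h2] := H x y xF yF xy => //.
exact: leq_trans h2 k2.
Qed.

Lemma single d (F : {set word d}) : #|F| <= 1 -> \sum_(x in F) 2 ^ jokers x = 2 ^ d ->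
  F = [set all_joker d].
Proof.
move=> F1 Hs; case: (posnP #|F|) => F0.
  move: F0 => /eqP; rewrite cards_eq0 => /eqP F0; move: Hs; rewrite F0 big_set0.
  by move/eqP; rewrite eq_sym expn_eq0.
have /cards1P [x Fx] : #|F| == 1 by rewrite eqn_leq F1 F0.
move: Hs; rewrite Fx big_set1 => /eqP; rewrite eqn_exp2l // => /eqP jx.
have Hx : [set i | x i == joker] = [set: 'I_d].
  by apply/eqP; rewrite eqEcard subsetT /= cardsT card_ord; exact: (eq_leq (esym jx)).
congr [set _]; apply/ffunP => i; rewrite ffunE.
by have := in_setT i; rewrite -Hx inE => /eqP.
Qed.

Lemma core2 d (F : {set word d}) : 1 < #|F| -> disj F -> nb2 F -> cov F ->
  exists m, forall w, w \in F -> w m != None.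
Proof.
move=> F2; apply: (@core (#|F| - 2)); lia.
Qed.

Lemma main d : forall F : {set word d.+1}, disj F -> nb2 F ->
  \sum_(x in F) 2 ^ jokers x = 2 ^ d.+1 -> total_lamination F.
Proof.
elim: d => [|d IH] F HF H2 Hs; have Hc := part_cov HF Hs;
  (case: (leqP #|F| 1) => F2; first by rewrite (single F2 Hs); apply: TL_joker);
  have [m Hm] := core2 F2 HF H2 Hc.
- have -> : F = full_cube 1.
    apply/setP => w; rewrite inE; apply/idP/forallP => [wF i|wn].
      by rewrite (ord1 i) -(ord1 m); exact: Hm.
    have [w' w'F cw] := Hc (ptw w).
    suff -> : w = w' by [].
    apply/ffunP => i; move/forallP: cw => /(_ i); rewrite (ord1 i) -(ord1 m) ffunE.
    move: (Hm w' w'F) (wn m); case: (w' m) => [c|] //= _.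
    by case: (w m) => [[]|] //= _ /eqP.
  by apply: TL_cube.
have Hsub : forall b : bool, total_lamination (del_fam m (fam_at F m (Some b))).
  move=> b; have [G1 G2 G3] := sub_ok b HF H2 Hc Hm.
  by apply: IH => //; apply: cov_part.
apply: TL_split (Hsub false) (Hsub true).
split.
  split => //; exists 2 => x y xF yF xy; rewrite HF //= H2 //.
apply/setP => w; rewrite !inE /s0 /s1; case wF: (w \in F) => //=.
by move: (Hm w wF); case: (w m) => [[]|].
Qed.

Theorem corollary3 (d : nat) (k : nat) (F : {set word d}) :
  1 <= d -> k <= 2 -> neighborly k F -> is_partition F ->
  total_lamination F.
Proof.
case: d F => [//|d] F _ k2 Hk [_ Hs].
have [HF H2] := nb_of k2 Hk.
exact: main.
Qed.
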